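(* Let $(\mathcal{C},\Sigma,\mathscr{N})$ be an $n$-angulated category. Let $A_1\xrightarrow{\alpha_1}A_2\xrightarrow{\alpha_2}\cdots\xrightarrow{\alpha_{n-1}}A_n\xrightarrow{\alpha_n}\Sigma A_1$ and $A_1\xrightarrow{\beta_1}B_2\xrightarrow{\beta_2}B_3\to\cdots\xrightarrow{\beta_{n-1}}B_n\xrightarrow{\beta_n}\Sigma A_1$ be $n$-angles and $\varphi_2\colon A_2\to B_2$ a morphism with $\varphi_2\alpha_1=\beta_1$. Suppose $\varphi_3,\dots,\varphi_n$ are morphisms $\varphi_i\colon A_i\to B_i$ such that $(1_{A_1},\varphi_2,\dots,\varphi_n)$ is a morphism of $n$-$\Sigma$-sequences whose mapping cone is an $n$-angle (such $\varphi_i$ exist by (N4)). Then the $n$-$\Sigma$-sequence $$A_2\xrightarrow{\left[\begin{smallmatrix}-\alpha_2\\ \varphi_2\end{smallmatrix}\right]}A_3\oplus B_2\xrightarrow{\left[\begin{smallmatrix}\alpha_3&0\\ \varphi_3&\beta_2\end{smallmatrix}\right]}A_4\oplus B_3\xrightarrow{\left[\begin{smallmatrix}\alpha_4&0\\ -\varphi_4&\beta_3\end{smallmatrix}\right]}\cdots\xrightarrow{\left[\begin{smallmatrix}\alpha_{n-1}&0\\ (-1)^n\varphi_{n-1}&\beta_{n-2}\end{smallmatrix}\right]}A_n\oplus B_{n-1}\xrightarrow{\left[\begin{smallmatrix}(-1)^{n+1}\varphi_n&\beta_{n-1}\end{smallmatrix}\right]}B_n\xrightarrow{\Sigma\alpha_1\circ\beta_n}\Sigma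 A_2,$$ in which for $3\le k\le n-1$ the map $A_k\oplus B_{k-1}\to A_{k+1}\oplus B_k$ is $\left[\begin{smallmatrix}\alpha_k&0\\ (-1)^{k+1}\varphi_k&\beta_{k-1}\end{smallmatrix}\right]$, is an $n$-angle.
   Context: $\mathcal{C}$ is an additive category, $\Sigma$ an automorphism of $\mathcal{C}$, $n\ge3$. An $n$-$\Sigma$-sequence is a diagram $A_1\xrightarrow{\alpha_1}A_2\to\cdots\xrightarrow{\alpha_{n-1}}A_n\xrightarrow{\alpha_n}\Sigma A_1$; its left rotation is $A_2\xrightarrow{\alpha_2}\cdots\xrightarrow{\alpha_n}\Sigma A_1\xrightarrow{(-1)^n\Sigma\alpha_1}\Sigma A_2$. A morphism $(\varphi_1,\dots,\varphi_n)\colon A_\bullet\to B_\bullet$ consists of $\varphi_i\colon A_i\to B_i$ with $\varphi_{i+1}\alpha_i=\beta_i\varphi_i$ ($1\le i\le n-1$) and $\Sigma\varphi_1\alpha_n=\beta_n\varphi_n$; isomorphisms have all $\varphi_i$ invertible. Direct sums are termwise; $A_\bullet$ is a direct summand of $B_\bullet$ if there are morphisms $\varphi\colon A_\bullet\to B_\bullet$, $\psi\colon B_\bullet\to A_\bullet$ with $\psi_i\varphi_i=1$. The mapping cone of a morphism $(\varphi_1,\dots,\varphi_n)\colon A_\bullet\to B_\bullet$ is the $n$-$\Sigma$-sequence $A_2\oplus B_1\xrightarrow{\left[\begin{smallmatrix}-\alpha_2&0\\ \varphi_2&\beta_1\end{smallmatrix}\right]}A_3\oplus B_2\xrightarrow{\left[\begin{smallmatrix}-\alpha_3&0\\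 \varphi_3&\beta_2\end{smallmatrix}\right]}\cdots\xrightarrow{\left[\begin{smallmatrix}-\alpha_n&0\\ \varphi_n&\beta_{n-1}\end{smallmatrix}\right]}\Sigma A_1\oplus B_n\xrightarrow{\left[\begin{smallmatrix}-\Sigma\alpha_1&0\\ \Sigma\varphi_1&\beta_n\end{smallmatrix}\right]}\Sigma A_2\oplus\Sigma B_1$. An $n$-angulated category is a triple $(\mathcal{C},\Sigma,\mathscr{N})$ where $\mathscr{N}$ is a collection of $n$-$\Sigma$-sequences (called $n$-angles) satisfying: (N1)(a) $\mathscr{N}$ is closed under direct sums, direct summands and isomorphisms; (b) $A\xrightarrow{1}A\to0\to\cdots\to0\to\Sigma A$ is in $\mathscr{N}$ for every $A$; (c) every morphism $A_1\to A_2$ is the first morphism of some sequence in $\mathscr{N}$. (N2) a sequence is in $\mathscr{N}$ iff its left rotation is. (N3) given $A_\bullet,B_\bullet\in\mathscr{N}$ and $\varphi_1,\varphi_2$ with $\varphi_2\alpha_1=\beta_1\varphi_1$, there exist $\varphi_3,\dots,\varphi_n$ making $(\varphi_1,\dots,\varphi_n)$ a morphism. (N4) in the situation of (N3), $\varphi_3,\dots,\varphi_n$ can be chosen so that the mapping cone is in $\mathscr{N}$. *)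

(* Defs.v *)
From HB Require Import structures.
From mathcomp Require Import all_boot all_algebra.
From Stdlib Require Import ClassicalEpsilon.

Set Implicit Arguments.
Unset Strict Implicit.
Unset Printing Implicit Defensive.
Import GRing.Theory.

Record addcat := AddCat {
  Ob :> Type;
  HomC : Ob -> Ob -> zmodType;
  comp : forall A B D : Ob, HomC B D -> HomC A B -> HomC A D;
  idm : forall A : Ob, HomC A A;
  compA : forall A B D E (h : HomC D E) (g : HomC B D) (f : HomC A B),
      comp h (comp g f) = comp (comp h g) f;
  comp1f : forall A B (f : HomC A B), comp (idm B) f = f;
  compf1 : forall A B (f : HomC A B), comp f (idm A) = f;
  compDl : forall A B D (g g' : HomC B D) (f : HomC A B),
      comp (g + g')%R f = (comp g f + comp g' f)%R;
  compDr : forall A B D (g : HomC B D) (f f' : HomC A B),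
      comp g (f + f')%R = (comp g f + comp g f')%R;
  zob : Ob;
  zob_id : idm zob = 0%R;
  bsum : Ob -> Ob -> Ob;
  binl : forall A B, HomC A (bsum A B);
  binr : forall A B, HomC B (bsum A B);
  bprl : forall A B, HomC (bsum A B) A;
  bprr : forall A B, HomC (bsum A B) B;
  bprl_inl : forall A B, comp (bprl A B) (binl A B) = idm A;
  bprr_inr : forall A B, comp (bprr A B) (binr A B) = idm B;
  bprl_inr : forall A B, comp (bprl A B) (binr A B) = 0%R;
  bprr_inl : forall A B, comp (bprr A B) (binl A B) = 0%R;
  bsum_id : forall A B,
      (comp (binl A B) (bprl A B) + comp (binr A B) (bprr A B))%R = idm (bsum A B)
}.

Arguments HomC {c} : rename.
Arguments comp {c A B D} : rename.
Arguments idm {c} : rename.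
Arguments zob {c} : rename.
Arguments bsum {c} : rename.
Arguments binl {c A B} : rename.
Arguments binr {c A B} : rename.
Arguments bprl {c A B} : rename.
Arguments bprr {c A B} : rename.

Notation "g ∘ f" := (comp g f) (at level 40, left associativity).

Record autom (C : addcat) := Autom {
  SO : C -> C;
  SM : forall A B : C, HomC A B -> HomC (SO A) (SO B);
  SM_id : forall A : C, SM (idm A) = idm (SO A);
  SM_comp : forall (A B D : C) (g : HomC B D) (f : HomC A B),
      SM (g ∘ f) = SM g ∘ SM f;
  SM_add : forall (A B : C) (f g : HomC A B), SM (f + g)%R = (SM f + SM g)%R;
  SO_bij : bijective SO;
  SM_bij : forall A B : C, bijective (@SM A B)
}.
Arguments SO {C} s _ : rename.
Arguments SM {C} s {A B} _ : rename.

(* castH f is f transported to HomC A' B' when A = A' and B = B'         *)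
(* (and 0 otherwise); it is only ever used where these equalities hold, *)
(* to get around the non-convertibility of index expressions such as    *)
(* n.-1.+1 and n.                                                       *)
Definition hcast (C : addcat) (A B A' B' : C) (eA : A = A') (eB : B = B')
    (f : HomC A B) : HomC A' B' :=
  match eA in _ = X return HomC X B' with
  | erefl => match eB in _ = Y return HomC A Y with erefl => f end
  end.

Definition castH (C : addcat) (A B A' B' : C) (f : HomC A B) : HomC A' B' :=
  match excluded_middle_informative (A = A'),
        excluded_middle_informative (B = B') with
  | left eA, left eB => hcast eA eB f
  | _, _ => 0%R
  end.
Arguments castH {C A B A' B'} f.

Definition sgn (V : zmodType) (b : bool) (x : V) : V := if b then (- x)%R else x.

Section NSseq.
Variables (C : addcat) (S : autom C) (n : nat).

Definition mat (P Q R T : C) (a : HomC P R) (b : HomC Q R) (c : HomC P T)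
    (d : HomC Q T) : HomC (bsum P Q) (bsum R T) :=
  (binl ∘ (a ∘ bprl + b ∘ bprr) + binr ∘ (c ∘ bprl + d ∘ bprr))%R.

(* Objects are sob i for 1 <= i <= n (position n written n.-1.+1),
   maps smor i : A_i -> A_{i+1} for 1 <= i <= n-1, and slst : A_n -> Sigma A_1.
   Values at other indices are irrelevant junk. *)
Record nSseq := NSseq {
  sob : nat -> C;
  smor : forall i, HomC (sob i) (sob i.+1);
  slst : HomC (sob n.-1.+1) (SO S (sob 1))
}.

Definition is_morph (X Y : nSseq) (phi : forall i, HomC (sob X i) (sob Y i)) :=
  (forall i, 1 <= i <= n.-1 -> phi i.+1 ∘ smor X i = smor Y i ∘ phi i) /\
  SM S (phi 1) ∘ slst X = slst Y ∘ phi n.-1.+1.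

Definition invertible (A B : C) (f : HomC A B) :=
  exists g : HomC B A, g ∘ f = idm A /\ f ∘ g = idm B.

Definition is_iso (X Y : nSseq) (phi : forall i, HomC (sob X i) (sob Y i)) :=
  is_morph phi /\ forall i, 1 <= i <= n -> invertible (phi i).

(* termwise direct sum; last map composed with the canonical
   Sigma A_1 (+) Sigma B_1 ~= Sigma (A_1 (+) B_1) *)
Definition dsum (X Y : nSseq) : nSseq :=
  @NSseq (fun i => bsum (sob X i) (sob Y i))
        (fun i => mat (smor X i) 0%R 0%R (smor Y i))
        (SM S binl ∘ slst X ∘ bprl + SM S binr ∘ slst Y ∘ bprr)%R.

Definition summand (X Y : nSseq) :=
  exists (phi : forall i, HomC (sob X i) (sob Y i))
         (psi : forall i, HomC (sob Y i) (sob X i)),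
    [/\ is_morph phi, is_morph psi &
        forall i, 1 <= i <= n -> psi i ∘ phi i = idm (sob X i)].

Definition triv (A : C) : nSseq :=
  @NSseq (fun i => if i <= 2 then A else zob)
        (fun i => if i == 1 then castH (idm A) else 0%R)
        0%R.

Definition rob (X : nSseq) (i : nat) : C :=
  if i <= n.-1 then sob X i.+1 else SO S (sob X 1).

Definition rot (X : nSseq) : nSseq :=
  @NSseq (rob X)
        (fun i => if i.+1 <= n.-1 then castH (smor X i.+1)
                  else if i == n.-1 then castH (slst X) else 0%R)
        (castH (sgn (odd n) (SM S (smor X 1)))).

Definition cob (X Y : nSseq) (i : nat) : C :=
  if i <= n.-1 then bsum (sob X i.+1) (sob Y i)
  else bsum (SO S (sob X 1)) (sob Y i).

Definition clst0 (X Y : nSseq) (phi : forall i, HomC (sob X i) (sob Y i)) :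
    HomC (bsum (SO S (sob X 1)) (sob Y n.-1.+1)) (SO S (bsum (sob X 2) (sob Y 1))) :=
  (SM S binl ∘ (- SM S (smor X 1)) ∘ bprl +
   SM S binr ∘ (SM S (phi 1) ∘ bprl + slst Y ∘ bprr))%R.

Definition cone (X Y : nSseq) (phi : forall i, HomC (sob X i) (sob Y i)) : nSseq :=
  @NSseq (cob X Y)
        (fun i => if i.+1 <= n.-1 then
                    castH (mat (- smor X i.+1)%R 0%R (phi i.+1) (smor Y i))
                  else if i == n.-1 then
                    castH (mat (- (castH (slst X) : HomC (sob X i.+1) (SO S (sob X 1))))%R
                               0%R (phi i.+1) (smor Y i))
                  else 0%R)
        (castH (clst0 phi)).

Record nangulated (N : nSseq -> Prop) : Prop := {
  N1a_sum : forall X Y, N X -> N Y -> N (dsum X Y);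
  N1a_summand : forall X Y, N Y -> summand X Y -> N X;
  N1a_iso : forall X Y (phi : forall i, HomC (sob X i) (sob Y i)), N X -> is_iso phi -> N Y;
  N1b : forall A : C, N (triv A);
  N1c : forall (A1 A2 : C) (f : HomC A1 A2), exists X,
      [/\ N X, sob X 1 = A1, sob X 2 = A2 & castH (smor X 1) = f];
  N2 : forall X, N X <-> N (rot X);
  N3 : forall X Y, N X -> N Y ->
      forall (f1 : HomC (sob X 1) (sob Y 1)) (f2 : HomC (sob X 2) (sob Y 2)),
      f2 ∘ smor X 1 = smor Y 1 ∘ f1 ->
      exists phi : forall i, HomC (sob X i) (sob Y i),
        [/\ phi 1 = f1, phi 2 = f2 & is_morph phi];
  N4 : forall X Y, N X -> N Y ->
      forall (f1 : HomC (sob X 1) (sob Y 1)) (f2 : HomC (sob X 2) (sob Y 2)),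
      f2 ∘ smor X 1 = smor Y 1 ∘ f1 ->
      exists phi : forall i, HomC (sob X i) (sob Y i),
        [/\ phi 1 = f1, phi 2 = f2, is_morph phi & N (cone phi)]
}.

(* Position 1: A_2; position k (2 <= k <= n-1): A_{k+1} (+) B_k; position n: B_n. *)
Definition l4ob (X Y : nSseq) (k : nat) : C :=
  if k == 1 then sob X 2
  else if k <= n.-1 then bsum (sob X k.+1) (sob Y k) else sob Y k.

Definition l4seq (X Y : nSseq) (phi : forall i, HomC (sob X i) (sob Y i)) : nSseq :=
  @NSseq (l4ob X Y)
    (fun k =>
       if k == 1 then
         castH (binl ∘ (- smor X 2) + binr ∘ phi 2
                  : HomC (sob X 2) (bsum (sob X 3) (sob Y 2)))%R
       else if k.+1 <= n.-1 then
         castH (mat (smor X k.+1) 0%R (sgn (odd k) (phi k.+1)) (smor Y k))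
       else if k == n.-1 then
         castH (sgn (~~ odd n) (phi k.+1) ∘ bprl + smor Y k ∘ bprr
                  : HomC (bsum (sob X k.+1) (sob Y k)) (sob Y k.+1))%R
       else 0%R)
    (castH (SM S (smor X 1) ∘
              (castH (slst Y) : HomC (sob Y n.-1.+1) (SO S (sob X 1))))).

End NSseq.

(* Main.v *)
Require Import Defs.
From HB Require Import structures.
From mathcomp Require Import all_boot all_algebra.
From Stdlib Require Import ClassicalEpsilon ProofIrrelevance.
Set Implicit Arguments. Unset Strict Implicit. Unset Printing Implicit Defensive.
Import GRing.Theory.

Section Basic.
Local Open Scope ring_scope.
Variable C : addcat.
Implicit Types A B D E : C.

Lemma comp0r A B D (g : HomC B D) : g ∘ (0 : HomC A B) = 0.
Proof. apply: (addrI (g ∘ (0 : HomC A B))); by rewrite -Defs.compDr !addr0. Qed.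
Lemma comp0l A B D (f : HomC A B) : (0 : HomC B D) ∘ f = 0.
Proof. apply: (addrI ((0 : HomC B D) ∘ f)); by rewrite -Defs.compDl !addr0. Qed.
Lemma compNl A B D (g : HomC B D) (f : HomC A B) : (- g) ∘ f = - (g ∘ f).
Proof. apply: (addrI (g ∘ f)); by rewrite -Defs.compDl !subrr comp0l. Qed.
Lemma compNr A B D (g : HomC B D) (f : HomC A B) : g ∘ (- f) = - (g ∘ f).
Proof. apply: (addrI (g ∘ f)); by rewrite -Defs.compDr !subrr comp0r. Qed.

Lemma LA1 A B D (f : HomC A D) : (f ∘ @bprl C A B) ∘ binl = f.
Proof. by rewrite -Defs.compA Defs.bprl_inl Defs.compf1. Qed.
Lemma LA2 A B D (f : HomC A D) : (f ∘ @bprl C A B) ∘ binr = 0.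
Proof. by rewrite -Defs.compA Defs.bprl_inr comp0r. Qed.
Lemma LA3 A B D (f : HomC B D) : (f ∘ @bprr C A B) ∘ binr = f.
Proof. by rewrite -Defs.compA Defs.bprr_inr Defs.compf1. Qed.
Lemma LA4 A B D (f : HomC B D) : (f ∘ @bprr C A B) ∘ binl = 0.
Proof. by rewrite -Defs.compA Defs.bprr_inl comp0r. Qed.

Lemma ext_r A B D (f g : HomC A (bsum B D)) :
  bprl ∘ f = bprl ∘ g -> bprr ∘ f = bprr ∘ g -> f = g.
Proof.
move=> h1 h2; rewrite -(Defs.comp1f f) -(Defs.comp1f g) -Defs.bsum_id !Defs.compDl -!Defs.compA h1 h2 //.
Qed.
Lemma ext_l A B D (f g : HomC (bsum A B) D) :
  f ∘ binl = g ∘ binl -> f ∘ binr = g ∘ binr -> f = g.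
Proof.
move=> h1 h2; rewrite -(Defs.compf1 f) -(Defs.compf1 g) -Defs.bsum_id !Defs.compDr !Defs.compA h1 h2 //.
Qed.

Lemma castH_id A B (f : HomC A B) : castH f = f.
Proof.
rewrite /castH; case: excluded_middle_informative => [eA|]; last by case.
case: excluded_middle_informative => [eB|]; last by case.
by rewrite (proof_irrelevance _ eA erefl) (proof_irrelevance _ eB erefl).
Qed.

Lemma castH0 A B A' B' : (castH (0 : HomC A B) : HomC A' B') = 0.
Proof.
rewrite /castH; case: excluded_middle_informative => [eA|] //.
case: excluded_middle_informative => [eB|] //.
by case: A' / eA; case: B' / eB.
Qed.

Lemma castH_comp A B D A' B' D' (g : HomC B D) (f : HomC A B) :
  A = A' -> B = B' -> D = D' ->
  (castH g : HomC B' D') ∘ (castH f : HomC A' B') = castH (g ∘ f).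
Proof. by move=> eA eB eD; subst; rewrite !castH_id. Qed.

Lemma castH_congr A B A' B' (f g : HomC A B) : f = g -> (castH f : HomC A' B') = castH g.
Proof. by move->. Qed.

Lemma castH_idm A A' : A = A' -> (castH (idm A) : HomC A' A') = idm A'.
Proof. by move=> e; subst; rewrite castH_id. Qed.

Lemma castH_post A B B' (f : HomC A B) : B = B' ->
  (castH f : HomC A B') = (castH (idm B) : HomC B B') ∘ f.
Proof. by move=> e; subst; rewrite !castH_id Defs.comp1f. Qed.

Lemma castH_idK A B : A = B ->
  (castH (idm A) : HomC A B) ∘ (castH (idm B) : HomC B A) = idm B.
Proof. by move=> e; subst; rewrite !castH_id Defs.comp1f. Qed.

Variable S : autom C.
Lemma SM0 A B : SM S (0 : HomC A B) = 0.
Proof. apply: (addrI (SM S (0 : HomC A B))); by rewrite -Defs.SM_add !addr0. Qed.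
Lemma SMN A B (f : HomC A B) : SM S (- f) = - SM S f.
Proof. apply: (addrI (SM S f)); by rewrite -Defs.SM_add !subrr SM0. Qed.
Lemma SM_castH A B A' B' (f : HomC A B) : A = A' -> B = B' ->
  SM S (castH f : HomC A' B') = castH (SM S f).
Proof. by move=> eA eB; subst; rewrite !castH_id. Qed.
Lemma SMLA1 A B D (f : HomC (SO S A) D) : (f ∘ SM S (@bprl C A B)) ∘ SM S binl = f.
Proof. by rewrite -Defs.compA -Defs.SM_comp Defs.bprl_inl Defs.SM_id Defs.compf1. Qed.
Lemma SMLA2 A B D (f : HomC (SO S A) D) : (f ∘ SM S (@bprl C A B)) ∘ SM S binr = 0.
Proof. by rewrite -Defs.compA -Defs.SM_comp Defs.bprl_inr SM0 comp0r. Qed.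
Lemma SMLA3 A B D (f : HomC (SO S B) D) : (f ∘ SM S (@bprr C A B)) ∘ SM S binr = f.
Proof. by rewrite -Defs.compA -Defs.SM_comp Defs.bprr_inr Defs.SM_id Defs.compf1. Qed.
Lemma SMLA4 A B D (f : HomC (SO S B) D) : (f ∘ SM S (@bprr C A B)) ∘ SM S binl = 0.
Proof. by rewrite -Defs.compA -Defs.SM_comp Defs.bprr_inl SM0 comp0r. Qed.
Lemma SMI1 A B : SM S (@bprl C A B) ∘ SM S binl = idm _.
Proof. by rewrite -Defs.SM_comp Defs.bprl_inl Defs.SM_id. Qed.
Lemma SMI2 A B : SM S (@bprl C A B) ∘ SM S binr = 0.
Proof. by rewrite -Defs.SM_comp Defs.bprl_inr SM0. Qed.
Lemma SMI3 A B : SM S (@bprr C A B) ∘ SM S binr = idm _.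
Proof. by rewrite -Defs.SM_comp Defs.bprr_inr Defs.SM_id. Qed.
Lemma SMI4 A B : SM S (@bprr C A B) ∘ SM S binl = 0.
Proof. by rewrite -Defs.SM_comp Defs.bprr_inl SM0. Qed.
End Basic.

Ltac nf := repeat progress (rewrite ?Defs.compDl ?Defs.compDr ?compNl ?compNr ?comp0l ?comp0r
  ?Defs.compA ?Defs.bprl_inl ?Defs.bprr_inr ?Defs.bprl_inr ?Defs.bprr_inl ?LA1 ?LA2 ?LA3 ?LA4
  ?SMLA1 ?SMLA2 ?SMLA3 ?SMLA4 ?SMI1 ?SMI2 ?SMI3 ?SMI4
  ?Defs.comp1f ?Defs.compf1 ?addr0 ?add0r ?oppr0 ?opprK).
Lemma castH_idm' (C : addcat) (A A' : C) (f : HomC A A) : A = A' -> f = idm A -> (castH f : HomC A' A') = idm A'.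
Proof. by move=> e ->; apply: castH_idm. Qed.

Section ZZ.
Local Open Scope ring_scope.
Lemma zero12 (C : addcat) (S : autom C) m (N : nSseq S m.+3 -> Prop) (HN : nangulated N) (X : nSseq S m.+3) :
  N X -> smor X 2 ∘ smor X 1 = 0.
Proof.
move=> HX.
have HT := N1b HN (sob X 1).
have [|phi [h1 h2 [hm _]]] := N3 HN HT HX (f1:=idm (sob X 1)) (f2:=smor X 1).
  by rewrite /= castH_id Defs.compf1.
have := hm 2 erefl; rewrite /= comp0r h2 => <-. done.
Qed.

Lemma zerolast (C : addcat) (S : autom C) m (N : nSseq S m.+3 -> Prop) (HN : nangulated N) (Y : nSseq S m.+3) :
  N Y -> slst Y ∘ smor Y m.+2 = 0.
Proof.
move=> HY.
have HT : N (Defs.rot (triv S m.+3 (sob Y 1))) by apply: (proj1 (N2 HN _)); apply: (N1b HN).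
have [|phi [h1 h2 [hm hl]]] := N3 HN HY HT (f1:=idm (sob Y 1)) (f2:=0).
  by rewrite comp0l /= castH0 comp0l.
have := hm m.+2; rewrite leqnn /= => /(_ isT).
rewrite ltnn eqxx castH0 comp0l => hz.
move: hl; rewrite h1 Defs.SM_id Defs.comp1f => ->.
by rewrite -Defs.compA hz comp0r.
Qed.
End ZZ.

Theorem lemma4p1 (C : addcat) (S : autom C) (n : nat)
    (N : nSseq S n -> Prop) :
  3 <= n -> nangulated N ->
  forall (X Y : nSseq S n), N X -> N Y ->
  sob Y 1 = sob X 1 ->
  forall phi : forall i, HomC (sob X i) (sob Y i),
    phi 1 = castH (idm (sob X 1)) ->
    is_morph phi ->
    N (cone phi) ->
    N (l4seq phi).
Proof.
Local Open Scope ring_scope.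
case: n N => [|[|[|m]]] N // _ HN X Y HX HY e phi Hphi1 [Hmor Hlst] HC.
pose v : HomC (sob Y 1) (sob X 1) := castH (idm (sob Y 1)).
have uv : phi 1%N ∘ v = idm _ by rewrite Hphi1 castH_idK.
have vu : v ∘ phi 1%N = idm _ by rewrite Hphi1 castH_idK.
have Z1 := zero12 HN HX.
have Z2 := zerolast HN HY.
simpl in Hlst, Hmor.
have H1 : SM S v ∘ slst Y ∘ phi m.+3 = slst X.
  by rewrite -Defs.compA -Hlst Defs.compA -Defs.SM_comp vu Defs.SM_id Defs.comp1f.
have Hc : (castH (slst Y) : HomC (sob Y m.+3) (SO S (sob X 1))) = SM S v ∘ slst Y.
  by rewrite (castH_post _ (f_equal (SO S) e)) /v SM_castH // Defs.SM_id.
have Huv : forall D (h : HomC (SO S (sob Y 1)) D), h ∘ SM S (phi 1%N) ∘ SM S v = h.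
  by move=> D h; rewrite -Defs.compA -Defs.SM_comp uv Defs.SM_id Defs.compf1.
have Hvu : forall D (h : HomC (SO S (sob X 1)) D), h ∘ SM S v ∘ SM S (phi 1%N) = h.
  by move=> D h; rewrite -Defs.compA -Defs.SM_comp vu Defs.SM_id Defs.compf1.
have G1 : smor X 2 ∘ smor X 1 ∘ v = 0 by rewrite Z1 comp0l.
have G2 : phi 2%N ∘ smor X 1 ∘ v = smor Y 1.
  by rewrite Hmor // -Defs.compA uv Defs.compf1.
have H2 : SM S v ∘ slst Y ∘ smor Y m.+2 = 0 by rewrite -Defs.compA Z2 comp0r.
pose f : forall i, HomC (sob (l4seq phi) i) (sob (cone phi) i) := fun i =>
  if i == 1%N then castH (@binl C (sob X 2) (sob Y 1))
  else if (i <= m.+2)%N then castH (mat (sgn (odd i) (idm (sob X i.+1))) 0 0 (idm (sob Y i)))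
  else castH (binr - binl ∘ (SM S v ∘ slst Y) : HomC (sob Y m.+3) (bsum (SO S (sob X 1)) (sob Y m.+3))).
pose g : forall i, HomC (sob (cone phi) i) (sob (l4seq phi) i) := fun i =>
  if i == 1%N then castH (bprl + (smor X 1 ∘ v) ∘ bprr : HomC (bsum (sob X 2) (sob Y 1)) (sob X 2))
  else if (i <= m.+2)%N then castH (mat (sgn (odd i) (idm (sob X i.+1))) 0 0 (idm (sob Y i)))
  else castH (@bprr C (SO S (sob X 1)) (sob Y m.+3)).
apply: (N1a_summand HN HC); exists f, g; split.
- split.
  + move=> i /andP[Hi1 Hi2].
    have [->|n1] := eqVneq i 1%N.
      rewrite /f /= !castH_comp //; apply: castH_congr; by apply: ext_r; rewrite /mat; nf.
    have [->|n2] := eqVneq i m.+2.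
      rewrite /f /= ltnn eqxx ltnSn !negbK castH_id !castH_comp; try by rewrite /l4ob /cob /= ?ltnn ?ltnSn ?leqnn.
      apply: castH_congr; apply: ext_r; apply: ext_l; rewrite /mat /sgn; case: (odd m); nf; by rewrite ?H1 ?H2 ?oppr0.
    have i0 : (i == 0%N) = false by case: i Hi1 {n1 n2 Hi2}.
    have i3 : (i < m.+2)%N by rewrite ltn_neqAle n2 Hi2.
    have i4 : (i <= m.+2)%N by apply: ltnW.
    have i0' : (i.+1 == 1%N) = false by [].
    rewrite /f /= (negbTE n1) i0' i3 i4 !castH_comp; try by rewrite /l4ob /cob /= ?(negbTE n1) ?i0 ?i0' ?i3 ?i4.
    apply: castH_congr; apply: ext_r; apply: ext_l; rewrite /mat /sgn; case: (odd i); by nf.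
  + rewrite /f /= ltnn Hc SM_castH // !castH_comp; try by rewrite /l4ob /cob /= ?ltnn.
    apply: castH_congr; rewrite /clst0; nf; by rewrite Huv subrr addr0.
- split.
  + move=> i /andP[Hi1 Hi2].
    have [->|n1] := eqVneq i 1%N.
      rewrite /g /= !castH_comp //; apply: castH_congr; apply: ext_r; apply: ext_l; rewrite /mat; nf; by rewrite ?G1 ?G2 ?oppr0.
    have [->|n2] := eqVneq i m.+2.
      rewrite /g /= ltnn eqxx ltnSn !negbK castH_id !castH_comp; try by rewrite /l4ob /cob /= ?ltnn ?ltnSn ?leqnn.
      apply: castH_congr; apply: ext_l; rewrite /mat /sgn; case: (odd m); nf; by rewrite ?H1 ?H2 ?oppr0.
    have i0 : (i == 0%N) = false by case: i Hi1 {n1 n2 Hi2}.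
    have i3 : (i < m.+2)%N by rewrite ltn_neqAle n2 Hi2.
    have i4 : (i <= m.+2)%N by apply: ltnW.
    have i0' : (i.+1 == 1%N) = false by [].
    rewrite /g /= (negbTE n1) i0' i3 i4 !castH_comp; try by rewrite /l4ob /cob /= ?(negbTE n1) ?i0 ?i0' ?i3 ?i4.
    apply: castH_congr; apply: ext_r; apply: ext_l; rewrite /mat /sgn; case: (odd i); by nf.
  + rewrite /g /= ltnn Hc SM_castH // !castH_comp; try by rewrite /l4ob /cob /= ?ltnn.
    apply: castH_congr; apply: ext_l; rewrite /clst0 Defs.SM_add Defs.SM_comp Defs.SM_comp; nf; by rewrite ?Hvu ?addNr.
- move=> i /andP[Hi1 Hi2].
  have [->|n1] := eqVneq i 1%N.
    rewrite /f /g /= castH_comp //.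
    apply: castH_idm'; first by [].
    by nf.
  have [->|n2] := eqVneq i m.+3.
    rewrite /f /g /= ltnn castH_comp; try by rewrite /l4ob /cob /= ?ltnn.
    apply: castH_idm'; first by rewrite /l4ob /= ltnn.
    by nf.
  have i4 : (i <= m.+2)%N by rewrite -ltnS ltn_neqAle n2 Hi2.
  rewrite /f /g /= (negbTE n1) i4 castH_comp; try by rewrite /l4ob /cob /= ?(negbTE n1) ?i4.
  apply: castH_idm'; first by rewrite /l4ob /= (negbTE n1) i4.
  apply: ext_r; apply: ext_l; rewrite /mat /sgn; case: (odd i); by nf.
Qed.
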